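(* Let $(L,d)$ be a metric locale without isolated points and let $a\in L$ with $a^*=0$. Then there exists $g\in L$ with $g^*\vee g^{**}\le a$.
   Context: A frame (locale) $L$ is a complete lattice in which finite meets distribute over arbitrary joins; $a^*$ denotes the pseudocomplement of $a$. A diameter on $L$ is a map $d\colon L\to[0,+\infty]$ with (D1) $d(0)=0$; (D2) $a\le b\Rightarrow d(a)\le d(b)$; (D3) $a\wedge b\neq 0\Rightarrow d(a\vee b)\le d(a)+d(b)$; (D4) for every $\varepsilon>0$, $\bigvee\{a\in L\mid d(a)<\varepsilon\}=1$. Write $b\lhd_\varepsilon a$ if for every $c\in L$ with $d(c)<\varepsilon$, $c\wedge b\ne0$ implies $c\le a$. The diameter is admissible if $a=\bigvee\{b\in L\mid b\lhd_\varepsilon a \text{ for some }\varepsilon>0\}$ for all $a\in L$; a metric locale is a pair $(L,d)$ with $d$ an admissible diameter. A sublocale of $L$ is a subset closed under arbitrary meets such that $x\to s$ lies in it whenever $s$ does ($\to$ the Heyting implication); the open sublocale of $x$ is $\mathfrak{o}(x)=\{x\to y\mid y\in L\}$. A point of $L$ is $p\ne1$ such that $x\wedge y\le p$ implies $x\le p$ or $y\le p$; it is isolated if the sublocale $\{1,p\}$ equals $\mathfrak{o}(x)$ for some $x\in L$. *)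

(* Defs.v *)
From Stdlib Require Import Reals.
From Coquelicot Require Import Rbar.
Open Scope R_scope.

Record Frame := {
  carrier :> Type;
  fle : carrier -> carrier -> Prop;
  fle_refl : forall x, fle x x;
  fle_trans : forall x y z, fle x y -> fle y z -> fle x z;
  fle_antisym : forall x y, fle x y -> fle y x -> x = y;
  fsup : (carrier -> Prop) -> carrier;
  fsup_ub : forall (S : carrier -> Prop) x, S x -> fle x (fsup S);
  fsup_least : forall (S : carrier -> Prop) y,
      (forall x, S x -> fle x y) -> fle (fsup S) y;
  fmeet : carrier -> carrier -> carrier;
  fmeet_glb : forall x y z, fle z (fmeet x y) <-> (fle z x /\ fle z y);
  fmeet_distr : forall a (S : carrier -> Prop),
      fmeet a (fsup S) = fsup (fun c => exists s, S s /\ c = fmeet a s)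
}.

Section FrameOps.
Variable L : Frame.

Definition fbot : L := fsup L (fun _ => False).
Definition ftop : L := fsup L (fun _ => True).
Definition fjoin (x y : L) : L := fsup L (fun z => z = x \/ z = y).
Definition fimp (x y : L) : L := fsup L (fun z => fle L (fmeet L z x) y).
Definition pcompl (a : L) : L := fimp a fbot.

Definition is_point (p : L) : Prop :=
  p <> ftop /\ forall x y, fle L (fmeet L x y) p -> fle L x p \/ fle L y p.

Definition open_sublocale (x : L) (s : L) : Prop := exists y, s = fimp x y.

Definition isolated_point (p : L) : Prop :=
  is_point p /\
  exists x, forall s, (s = ftop \/ s = p) <-> open_sublocale x s.

Definition is_diameter (d : L -> Rbar) : Prop :=
  (forall a, Rbar_le (Finite 0) (d a)) /\
  d fbot = Finite 0 /\
  (forall a b, fle L a b -> Rbar_le (d a) (d b)) /\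
  (forall a b, fmeet L a b <> fbot ->
      Rbar_le (d (fjoin a b)) (Rbar_plus (d a) (d b))) /\
  (forall eps : R, 0 < eps ->
      fsup L (fun a => Rbar_lt (d a) (Finite eps)) = ftop).

Definition eps_below (d : L -> Rbar) (eps : R) (b a : L) : Prop :=
  forall c, Rbar_lt (d c) (Finite eps) -> fmeet L c b <> fbot -> fle L c a.

Definition admissible (d : L -> Rbar) : Prop :=
  forall a, a = fsup L (fun b => exists eps : R, 0 < eps /\ eps_below d eps b a).

Definition metric_locale (d : L -> Rbar) : Prop :=
  is_diameter d /\ admissible d.

End FrameOps.

Arguments fbot {L}.
Arguments ftop {L}.

(* Main.v *)
Require Import Defs.
From Stdlib Require Import Reals Lra Classical FunctionalExtensionality PropExtensionality ClassicalEpsilon.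
From Coquelicot Require Import Rbar.
Open Scope R_scope.

Section Zorn.
Variable T : Type.
Definition incl (A B : T -> Prop) := forall x, A x -> B x.
Definition bigU (C : (T -> Prop) -> Prop) : T -> Prop := fun x => exists S, C S /\ S x.

Variable next : (T -> Prop) -> (T -> Prop).
Hypothesis next_infl : forall A, incl A (next A).

Inductive Tower : (T -> Prop) -> Prop :=
| tw_next : forall A, Tower A -> Tower (next A)
| tw_sup : forall C, (forall A, C A -> Tower A) -> Tower (bigU C).

Lemma set_ext (A B : T -> Prop) : incl A B -> incl B A -> A = B.
Proof.
  intros H1 H2. apply functional_extensionality. intro x.
  apply propositional_extensionality. split; auto.
Qed.

Definition extreme A := forall B, Tower B -> incl B A -> ~ incl A B -> incl (next B) A.

Lemma lem1 A : extreme A -> forall B, Tower B -> incl B A \/ incl (next A) B.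
Proof.
  intros HE B HB. induction HB as [B HB IH | C HC IH].
  - destruct IH as [H1|H1].
    + destruct (classic (incl A B)) as [H2|H2].
      * right. replace B with A by (apply set_ext; auto). intros x; auto.
      * left. apply HE; auto.
    + right. intros x Hx. apply next_infl. auto.
  - destruct (classic (exists B, C B /\ incl (next A) B)) as [[B [HB1 HB2]]|Hn].
    + right. intros x Hx. exists B; auto.
    + left. intros x [B [HB1 HB2]]. destruct (IH B HB1) as [H|H].
      * auto.
      * exfalso; apply Hn; eauto.
Qed.

Lemma lem2 A : Tower A -> extreme A.
Proof.
  induction 1 as [A HA IH | C HC IH].
  - intros B HB H1 H2. destruct (lem1 A IH B HB) as [H3|H3]; [|contradiction].
    destruct (classic (incl A B)) as [H4|H4].
    + replace B with A by (apply set_ext; auto). intros x; auto.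
    + intros x Hx. apply next_infl. apply (IH B HB H3 H4 x Hx).
  - intros B HB H1 H2.
    destruct (classic (exists A', C A' /\ ~ incl A' B)) as [[A' [HA'1 HA'2]]|Hn].
    + destruct (lem1 A' (IH A' HA'1) B HB) as [H3|H3].
      * intros x Hx. exists A'. split; auto. apply (IH A' HA'1 B HB H3 HA'2 x Hx).
      * exfalso. apply HA'2. intros x Hx. apply H3. apply next_infl. auto.
    + exfalso. apply H2. intros x [A' [HC' Hx]].
      destruct (classic (incl A' B)) as [Hi|Hi]; [auto | exfalso; apply Hn; eauto].
Qed.

Lemma chain A B : Tower A -> Tower B -> incl A B \/ incl B A.
Proof.
  intros HA HB. destruct (lem1 A (lem2 A HA) B HB) as [H|H].
  - right; auto.
  - left; intros x Hx; apply H, next_infl, Hx.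
Qed.

Lemma top_fixed : incl (next (bigU Tower)) (bigU Tower).
Proof.
  intros x Hx. exists (next (bigU Tower)). split; auto.
  apply tw_next. apply tw_sup. auto.
Qed.
End Zorn.

Lemma zorn (T : Type) (P : (T->Prop)->Prop) :
  (forall C, (forall S, C S -> P S) ->
     (forall S1 S2, C S1 -> C S2 -> incl T S1 S2 \/ incl T S2 S1) -> P (bigU T C)) ->
  exists M, P M /\ forall S, P S -> incl T M S -> incl T S M.
Proof.
  intros Hch. apply NNPP. intro Hn.
  assert (Hex : forall M, exists S, incl T M S /\ (P M -> P S /\ ~ incl T S M)).
  { intro M. destruct (classic (P M)) as [HP|HP].
    - destruct (classic (exists S, P S /\ incl T M S /\ ~ incl T S M)) as [[S [H1 [H2 H3]]]|H].
      + exists S; auto.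
      + exfalso. apply Hn. exists M. split; auto. intros S HS HMS. apply NNPP; intro.
        apply H; eauto.
    - exists M. split. intros x; auto. intro; contradiction. }
  set (next := fun M => proj1_sig (constructive_indefinite_description _ (Hex M))).
  assert (Hnext : forall M, incl T M (next M) /\ (P M -> P (next M) /\ ~ incl T (next M) M)).
  { intro M. unfold next. destruct (constructive_indefinite_description _ (Hex M)); simpl; auto. }
  assert (Hinfl : forall M, incl T M (next M)) by (intro M; apply Hnext).
  assert (HP : forall A, Tower T next A -> P A).
  { induction 1 as [A HA IH | C HC IH].
    - apply Hnext; auto.
    - apply Hch; auto. intros S1 S2 H1 H2. apply (chain T next Hinfl); auto. }
  assert (HM : P (bigU T (Tower T next))) by (apply HP; apply tw_sup; auto).
  destruct (Hnext (bigU T (Tower T next))) as [_ H]. destruct (H HM) as [_ H'].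
  apply H'. apply top_fixed.
Qed.

Section FrameLemmas.
Variable L : Frame.
Notation le := (fle L).
Notation meet := (fmeet L).

Lemma meet_l x y : le (meet x y) x.
Proof. destruct (proj1 (fmeet_glb L x y (meet x y)) (fle_refl L _)); auto. Qed.
Lemma meet_r x y : le (meet x y) y.
Proof. destruct (proj1 (fmeet_glb L x y (meet x y)) (fle_refl L _)); auto. Qed.
Lemma meet_intro z x y : le z x -> le z y -> le z (meet x y).
Proof. intros; apply (proj2 (fmeet_glb L x y z)); auto. Qed.
Lemma meet_comm x y : meet x y = meet y x.
Proof. apply fle_antisym; apply meet_intro; (apply meet_l || apply meet_r). Qed.
Lemma meet_mono x y x' y' : le x x' -> le y y' -> le (meet x y) (meet x' y').
Proof.
  intros; apply meet_intro; [eapply fle_trans; [apply meet_l|] | eapply fle_trans; [apply meet_r|]]; auto.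
Qed.
Lemma bot_le x : le fbot x.
Proof. unfold fbot; apply fsup_least; intros _ []. Qed.
Lemma le_bot x : le x fbot -> x = fbot.
Proof. intros; apply fle_antisym; auto; apply bot_le. Qed.
Lemma le_top x : le x ftop.
Proof. unfold ftop; apply (fsup_ub L (fun _ => True) x); exact I. Qed.
Lemma meet_sup_le x S y : (forall s, S s -> le (meet x s) y) -> le (meet x (fsup L S)) y.
Proof. intros H; rewrite fmeet_distr; apply fsup_least; intros c [s [Hs ->]]; auto. Qed.
Lemma pcompl_meet y : meet (pcompl L y) y = fbot.
Proof.
  apply le_bot. unfold pcompl, fimp. rewrite meet_comm. apply meet_sup_le.
  intros s Hs. rewrite meet_comm; auto.
Qed.
Lemma le_pcompl z y : le (meet z y) fbot -> le z (pcompl L y).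
Proof. intros H; unfold pcompl, fimp. apply (fsup_ub L _ z). exact H. Qed.
Lemma fjoin_least x y z : le x z -> le y z -> le (fjoin L x y) z.
Proof. intros; unfold fjoin; apply fsup_least; intros w [-> | ->]; auto. Qed.
Lemma fjoin_l x y : le x (fjoin L x y).
Proof. unfold fjoin; apply (fsup_ub L _ x); auto. Qed.
Lemma fjoin_r x y : le y (fjoin L x y).
Proof. unfold fjoin; apply (fsup_ub L _ y); auto. Qed.
Lemma meet_ne_mono x y x' y' : le x x' -> le y y' -> meet x y <> fbot -> meet x' y' <> fbot.
Proof.
  intros H1 H2 H3 E. apply H3. apply le_bot. rewrite <- E. apply meet_mono; auto.
Qed.
End FrameLemmas.

Section Main.
Variable L : Frame.
Variable d : L -> Rbar.
Notation le := (fle L).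
Notation meet := (fmeet L).
Hypothesis Hnn : forall a, Rbar_le (Finite 0) (d a).
Hypothesis HD2 : forall a b, le a b -> Rbar_le (d a) (d b).
Hypothesis HD3 : forall a b, meet a b <> fbot ->
      Rbar_le (d (fjoin L a b)) (Rbar_plus (d a) (d b)).
Hypothesis HD4 : forall eps : R, 0 < eps ->
      fsup L (fun a => Rbar_lt (d a) (Finite eps)) = ftop.
Hypothesis Hadm : admissible L d.
Hypothesis Hnoiso : forall p : L, ~ isolated_point L p.

Lemma adm_le v y : (forall b eps, 0 < eps -> eps_below L d eps b v -> le b y) -> le v y.
Proof.
  intros H.
  apply fle_trans with (fsup L (fun b => exists eps, 0 < eps /\ eps_below L d eps b v)).
  - rewrite <- (Hadm v). apply fle_refl.
  - apply fsup_least. intros b [eps [He Hb]]. eauto.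
Qed.

Lemma adm_ub b eps v : 0 < eps -> eps_below L d eps b v -> le b v.
Proof.
  intros He Hb. rewrite (Hadm v). apply (fsup_ub L _ b). exists eps; split; auto.
Qed.

Lemma split_nonzero u : u <> fbot ->
  exists p q, le p u /\ le q u /\ p <> fbot /\ q <> fbot /\ meet p q = fbot.
Proof.
  intro Hu. apply NNPP. intro Hns.
  assert (Hirr : forall p q, le p u -> le q u -> p <> fbot -> q <> fbot -> meet p q <> fbot).
  { intros p q Hp Hq Hp0 Hq0 E. apply Hns. exists p, q. auto. }
  assert (Hatom : forall v, le v u -> v <> fbot -> le u v).
  { intros v Hv Hv0.
    assert (exists b eps, 0 < eps /\ eps_below L d eps b v /\ b <> fbot)
      as [b [eps [He [Hb Hb0]]]].
    { apply NNPP. intro Hn. apply Hv0. apply le_bot. apply adm_le.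
      intros b eps He Hb. destruct (classic (b = fbot)) as [->|Hb0].
      - apply fle_refl.
      - exfalso; apply Hn; exists b, eps; auto. }
    assert (Hbv : le b v) by (eapply adm_ub; eauto).
    apply fle_trans with (meet u ftop).
    { apply meet_intro; [apply fle_refl|apply le_top]. }
    rewrite <- (HD4 eps He). apply meet_sup_le. intros c Hc.
    destruct (classic (meet u c = fbot)) as [E|E].
    { rewrite E; apply bot_le. }
    apply fle_trans with c; [apply meet_r|].
    apply Hb; auto.
    intro E2. apply (Hirr (meet u c) b); auto.
    - apply meet_l.
    - eapply fle_trans; eauto.
    - apply le_bot. rewrite <- E2. apply meet_mono; [apply meet_r|apply fle_refl]. }
  apply (Hnoiso (pcompl L u)). split; [split|].
  - intro E. apply Hu. apply le_bot. rewrite <- (pcompl_meet L u). rewrite E.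
    apply meet_intro; [apply le_top|apply fle_refl].
  - intros x y Hxy.
    destruct (classic (meet x u = fbot)) as [Ex|Ex].
    { left. apply le_pcompl. rewrite Ex. apply fle_refl. }
    destruct (classic (meet y u = fbot)) as [Ey|Ey].
    { right. apply le_pcompl. rewrite Ey. apply fle_refl. }
    exfalso. apply Hu. apply le_bot.
    assert (H1 : le u x) by (eapply fle_trans; [apply (Hatom _ (meet_r L x u) Ex)|apply meet_l]).
    assert (H2 : le u y) by (eapply fle_trans; [apply (Hatom _ (meet_r L y u) Ey)|apply meet_l]).
    rewrite <- (pcompl_meet L u). apply meet_intro; [|apply fle_refl].
    eapply fle_trans; [|apply Hxy]. apply meet_intro; auto.
  - exists u. intro s; split.
    + intros [-> | ->].
      * exists u. apply fle_antisym; [|apply le_top]. unfold fimp.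
        apply (fsup_ub L _ ftop). apply meet_r.
      * exists fbot. reflexivity.
    + intros [y ->].
      destruct (classic (meet y u = fbot)) as [E|E].
      * right. apply fle_antisym.
        -- unfold fimp. apply fsup_least. intros z Hz. apply le_pcompl.
           rewrite <- E. apply meet_intro; auto. apply meet_r.
        -- unfold pcompl, fimp. apply fsup_least. intros z Hz.
           apply (fsup_ub L _ z). eapply fle_trans; [apply Hz|apply bot_le].
      * left. apply fle_antisym; [apply le_top|]. unfold fimp.
        apply (fsup_ub L _ ftop).
        eapply fle_trans; [apply meet_r|].
        eapply fle_trans; [apply (Hatom _ (meet_r L y u) E)|apply meet_l].
Qed.

Variable a : L.
Hypothesis Ha : pcompl L a = fbot.

Definition admW (W : L) := exists dl, 0 < dl /\ Rbar_lt (d W) (Finite dl) /\ eps_below L d dl W a.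
Definition TT := (carrier L * carrier L * carrier L)%type.
Definition tW (t : TT) : L := fst (fst t).
Definition tp (t : TT) : L := snd (fst t).
Definition tq (t : TT) : L := snd t.
Definition validT (t : TT) := le (tp t) (tW t) /\ le (tq t) (tW t) /\ tp t <> fbot /\
  tq t <> fbot /\ meet (tp t) (tq t) = fbot /\ admW (tW t).
Definition validF (S : TT -> Prop) := (forall t, S t -> validT t) /\
  (forall t1 t2, S t1 -> S t2 -> t1 <> t2 -> meet (tW t1) (tW t2) = fbot).

Lemma exists_max : exists M, validF M /\ forall S, validF S -> incl TT M S -> incl TT S M.
Proof.
  apply zorn. intros C HC Hch. split.
  - intros t [S [HS Ht]]. apply (HC S HS); auto.
  - intros t1 t2 [S1 [HS1 H1]] [S2 [HS2 H2]] Hne.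
    destruct (Hch S1 S2 HS1 HS2) as [Hi|Hi].
    + apply (proj2 (HC S2 HS2)); auto.
    + apply (proj2 (HC S1 HS1)); auto.
Qed.

Lemma core (M : TT -> Prop) (HM : validF M)
  (Hmax : forall S, validF S -> incl TT M S -> incl TT S M)
  (sel : TT -> L) (Hsel : forall t, validT t -> sel t <> fbot /\ le (sel t) (tW t))
  (x : L) : meet x (fsup L (fun y => exists t, M t /\ y = sel t)) = fbot -> le x a.
Proof.
  intros Hxk. apply adm_le. intros b eps He Hb.
  apply NNPP; intro Hba.
  assert (exists c, Rbar_lt (d c) (Finite (eps/3)) /\ ~ le (meet b c) a) as [c [Hc Hbc]].
  { apply NNPP; intro Hn. apply Hba. apply fle_trans with (meet b ftop).
    { apply meet_intro; [apply fle_refl|apply le_top]. }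
    rewrite <- (HD4 (eps/3)) by lra. apply meet_sup_le. intros c Hc.
    apply NNPP; intro. apply Hn. exists c; auto. }
  assert (Hcb : meet c b <> fbot).
  { intro E. apply Hbc. rewrite meet_comm, E. apply bot_le. }
  assert (Hdcr : exists rc, d c = Finite rc /\ rc < eps/3).
  { generalize (Hnn c); destruct (d c) as [rc| |]; simpl in *; try contradiction.
    intros; exists rc; auto. }
  destruct Hdcr as [rc [Edc Hrc]].
  assert (Hcx : le c x).
  { apply Hb; auto. rewrite Edc. simpl. lra. }
  assert (Hca : meet c a <> fbot).
  { intro E. apply Hbc. assert (Hc0 : c = fbot).
    { apply le_bot. rewrite <- Ha. apply le_pcompl. rewrite E. apply fle_refl. }
    rewrite Hc0. apply fle_trans with fbot; [apply meet_r|apply bot_le]. }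
  assert (exists v dl, 0 < dl /\ eps_below L d dl v a /\ meet c v <> fbot)
    as [v [dl [Hdl [Hv Hcv]]]].
  { apply NNPP; intro Hn. apply Hca. apply le_bot.
    rewrite (Hadm a). apply meet_sup_le. intros v [dl [Hdl Hv]].
    destruct (classic (meet c v = fbot)) as [E|E].
    - rewrite E; apply fle_refl.
    - exfalso; apply Hn; eauto. }
  assert (exists e, Rbar_lt (d e) (Finite dl) /\ meet (meet c v) e <> fbot)
    as [e [He' Hu]].
  { apply NNPP; intro Hn. apply Hcv. apply le_bot.
    apply fle_trans with (meet (meet c v) ftop).
    { apply meet_intro; [apply fle_refl|apply le_top]. }
    rewrite <- (HD4 dl Hdl). apply meet_sup_le. intros e0 He0.
    destruct (classic (meet (meet c v) e0 = fbot)) as [E|E].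
    - rewrite E; apply fle_refl.
    - exfalso; apply Hn; eauto. }
  set (u := meet (meet c v) e) in *.
  assert (Huc : le u c) by (unfold u; eapply fle_trans; apply meet_l).
  assert (Huv : le u v) by (unfold u; eapply fle_trans; [apply meet_l|apply meet_r]).
  assert (Hadmu : admW u).
  { exists dl. split; auto. split.
    - eapply Rbar_le_lt_trans; [apply HD2; apply meet_r|exact He'].
    - intros c' Hc' Hc'u. apply Hv; auto.
      eapply meet_ne_mono; [apply fle_refl|apply Huv|exact Hc'u]. }
  assert (exists t, M t /\ meet (tW t) u <> fbot) as [t [HtM Htu]].
  { apply NNPP; intro Hn.
    destruct (split_nonzero u Hu) as [p0 [q0 [Hp0 [Hq0 [Hp00 [Hq00 Hpq0]]]]]].
    set (S' := fun t => M t \/ t = (u, p0, q0)).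
    assert (Hdisj : forall t, M t -> meet (tW t) u = fbot).
    { intros t Ht. apply NNPP; intro. apply Hn; eauto. }
    assert (HS' : validF S').
    { split.
      - intros t [Ht| ->]; [apply (proj1 HM); auto|].
        unfold validT, tp, tq, tW; simpl. repeat split; auto.
      - intros t1 t2 [H1| ->] [H2| ->] Hne.
        + apply (proj2 HM); auto.
        + apply Hdisj; auto.
        + unfold tW at 1; simpl. rewrite meet_comm. apply Hdisj; auto.
        + congruence. }
    assert (Hin : M (u, p0, q0)).
    { apply (Hmax S' HS'). intros t Ht; left; auto. right; auto. }
    apply Hn. exists (u, p0, q0). split; auto. unfold tW; simpl.
    intro E. apply Hu. rewrite <- E. apply fle_antisym; [apply meet_intro; apply fle_refl|apply meet_l]. }
  destruct (proj1 HM t HtM) as [Hp [Hq [Hp0 [Hq0 [Hpq [dW [HdW [HdWl HbW]]]]]]]].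
  assert (HcW : meet c (tW t) <> fbot).
  { rewrite meet_comm. eapply meet_ne_mono; [apply fle_refl|apply Huc|exact Htu]. }
  assert (HnW : ~ Rbar_lt (d c) (Finite dW)).
  { intro Hlt. apply Hbc. apply fle_trans with c; [apply meet_r|]. apply HbW; auto. }
  assert (HdWr : exists rW, d (tW t) = Finite rW /\ rW < dW).
  { generalize (Hnn (tW t)); destruct (d (tW t)) as [rW| |]; simpl in *; try contradiction.
    intros; exists rW; auto. }
  destruct HdWr as [rW [EdW HrW]].
  rewrite Edc in HnW. simpl in HnW.
  assert (HWc : meet (tW t) c <> fbot) by (rewrite meet_comm; auto).
  generalize (HD3 _ _ HWc). rewrite Edc, EdW. simpl. intro HD.
  assert (Hlt : Rbar_lt (d (fjoin L (tW t) c)) (Finite eps)).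
  { eapply Rbar_le_lt_trans; [exact HD|]. simpl. lra. }
  assert (Hjx : le (fjoin L (tW t) c) x).
  { apply Hb; auto. eapply meet_ne_mono; [apply fjoin_r|apply fle_refl|exact Hcb]. }
  destruct (Hsel t (proj1 HM t HtM)) as [Hs0 Hs].
  apply Hs0. apply le_bot. rewrite <- Hxk. apply meet_intro.
  - eapply fle_trans; [exact Hs|]. eapply fle_trans; [apply fjoin_l|exact Hjx].
  - apply (fsup_ub L _ (sel t)). exists t; auto.
Qed.

Lemma main_res : exists g : L, le (fjoin L (pcompl L g) (pcompl L (pcompl L g))) a.
Proof.
  destruct exists_max as [M [HM Hmax]].
  set (g := fsup L (fun y => exists t, M t /\ y = tp t)).
  set (h := fsup L (fun y => exists t, M t /\ y = tq t)).
  assert (Hgh : meet h g = fbot).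
  { apply le_bot. unfold g. apply meet_sup_le. intros y [t [Ht ->]].
    rewrite meet_comm. unfold h. apply meet_sup_le. intros y [t' [Ht' ->]].
    destruct (classic (t = t')) as [<-|Hne].
    - destruct (proj1 HM t Ht) as (_&_&_&_&E&_). rewrite E; apply fle_refl.
    - rewrite <- (proj2 HM t t' Ht Ht' Hne).
      destruct (proj1 HM t Ht) as (Hp&_). destruct (proj1 HM t' Ht') as (_&Hq&_).
      apply meet_mono; auto. }
  exists g. apply fjoin_least.
  - apply (core M HM Hmax tp).
    + intros t (Hp&_&Hp0&_); auto.
    + apply pcompl_meet.
  - apply (core M HM Hmax tq).
    + intros t (_&Hq&_&Hq0&_); auto.
    + fold h. apply le_bot.
      apply fle_trans with (meet (pcompl L (pcompl L g)) (pcompl L g)).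
      * apply meet_mono; [apply fle_refl|]. apply le_pcompl. rewrite Hgh. apply fle_refl.
      * rewrite pcompl_meet. apply fle_refl.
Qed.
End Main.

Theorem corollary5p5 (L : Frame) (d : L -> Rbar)
  (Hmetric : metric_locale L d)
  (Hnoiso : forall p : L, ~ isolated_point L p)
  (a : L) (Ha : pcompl L a = fbot) :
  exists g : L, fle L (fjoin L (pcompl L g) (pcompl L (pcompl L g))) a.
Proof.
  destruct Hmetric as [[Hnn [HD1 [HD2 [HD3 HD4]]]] Hadm].
  eapply main_res; eauto.
Qed.
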